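(* Let $G$ be a tree on vertex set $[n]$ and let $p$ be the maximum length (number of edges) of a path in $G$. Let $\mathrm{CIM}_G=\operatorname{conv}\left(c_\mathcal{G}\colon \mathcal{G}\text{ a DAG on }[n]\text{ with skeleton } G\right)$. Then $\operatorname{diam}(\mathrm{CIM}_G)\geq \left\lfloor \frac{p}{2}\right\rfloor$.
   Context: For a directed acyclic graph (DAG) $\mathcal{G}$ on vertex set $[n]=\{1,\dots,n\}$, the characteristic imset $c_\mathcal{G}$ is the 0/1-vector indexed by the subsets $S\subseteq[n]$ with $|S|\geq 2$, with $c_\mathcal{G}(S)=1$ if there exists $i\in S$ such that $S\subseteq \mathrm{pa}_\mathcal{G}(i)\cup\{i\}$ (where $\mathrm{pa}_\mathcal{G}(i)$ is the set of parents of $i$), and $c_\mathcal{G}(S)=0$ otherwise. The skeleton of a DAG is the undirected graph with the same vertices and adjacencies. For a polytope $P$, the vertex-edge graph $G(P)$ has the vertices of $P$ as nodes, with two vertices adjacent iff their convex hull is an edge of $P$; $\operatorname{diam}(P)$ is the maximum over pairs of vertices of the length of a shortest path between them in $G(P)$. *)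

(* Defs.v *)
From mathcomp Require Import all_boot all_order all_algebra.
From mathcomp Require Import reals.
Set Implicit Arguments. Unset Strict Implicit. Unset Printing Implicit Defensive.
Import Order.TTheory GRing.Theory Num.Theory.
Local Open Scope ring_scope.

Definition is_tree (n : nat) (G : rel 'I_n) : Prop :=
  [/\ symmetric G, irreflexive G,
      (forall i j, connect G i j) &
      ~ (exists s : seq 'I_n, [/\ uniq s, (2 < size s)%N & cycle G s])].

(* p is the maximum length (number of edges) of a path in G. A path with k
   edges is given by a start vertex x and k further vertices s, all distinct. *)
Definition is_path (n : nat) (G : rel 'I_n) (x : 'I_n) (s : seq 'I_n) : bool :=
  path G x s && uniq (x :: s).

Definition max_path_length (n : nat) (G : rel 'I_n) (p : nat) : Prop :=
  (exists x s, is_path G x s /\ size s = p) /\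
  (forall x s, is_path G x s -> size s <= p)%N.

(* A directed graph on [n] is given by its parent sets: j -> i iff j \in pa i. *)
Definition digraph (n : nat) := {ffun 'I_n -> {set 'I_n}}.

Definition darc (n : nat) (D : digraph n) : rel 'I_n := fun j i => j \in D i.

Definition is_dag (n : nat) (D : digraph n) : bool :=
  [forall i, forall j, darc D j i ==> ~~ connect (darc D) i j].

Definition has_skeleton (n : nat) (D : digraph n) (G : rel 'I_n) : bool :=
  [forall i, forall j, G i j == (darc D i j || darc D j i)].

Definition cidx (n : nat) := {S : {set 'I_n} | (1 < #|S|)%N}.

Definition point (R : realType) (n : nat) := {ffun cidx n -> R}.

Definition cim (R : realType) (n : nat) (D : digraph n) : point R n :=
  [ffun S : cidx n => (if [exists i in val S, val S \subset i |: D i] then 1 else 0) : R].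

Definition CIM_points (R : realType) (n : nat) (G : rel 'I_n) : seq (point R n) :=
  [seq cim R D | D <- enum (fun D : digraph n => is_dag D && has_skeleton D G)].

Section Polytope.
Variables (R : realType) (I : finType).
Local Notation pt := {ffun I -> R}.

Definition conv (V : seq pt) (x : pt) : Prop :=
  exists lam : 'I_(size V) -> R,
    [/\ forall i, 0 <= lam i, \sum_i lam i = 1 &
        forall k, x k = \sum_i lam i * (nth [ffun=> 0] V i) k].

Definition dotp (c x : pt) : R := \sum_k c k * x k.

Definition face_of (V : seq pt) (F : pt -> Prop) : Prop :=
  exists (c : pt) (b : R),
    (forall x, conv V x -> dotp c x <= b) /\
    (forall x, F x <-> (conv V x /\ dotp c x = b)).

Definition is_vertex (V : seq pt) (v : pt) : Prop := face_of V (fun x => x = v).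

Definition ve_adj (V : seq pt) (u v : pt) : Prop :=
  [/\ is_vertex V u, is_vertex V v, u <> v & face_of V (conv [:: u; v])].

Fixpoint walk (V : seq pt) (x : pt) (s : seq pt) : Prop :=
  match s with
  | [::] => True
  | y :: s' => ve_adj V x y /\ walk V y s'
  end.

Definition dist_ge (V : seq pt) (u v : pt) (k : nat) : Prop :=
  forall s, walk V u s -> last u s = v -> (k <= size s)%N.

Definition diam_ge (V : seq pt) (k : nat) : Prop :=
  exists u v, [/\ is_vertex V u, is_vertex V v & dist_ge V u v k].

End Polytope.

(* Main.v *)
Require Import Defs.
From mathcomp Require Import all_boot all_order all_algebra.
From mathcomp Require Import reals.
From mathcomp Require Import zify.
From mathcomp Require Import lra.
Set Implicit Arguments. Unset Strict Implicit. Unset Printing Implicit Defensive.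
Import Order.TTheory GRing.Theory Num.Theory.
Local Open Scope ring_scope.

Lemma dotp_conv (R : realType) (I : finType) (V : seq {ffun I -> R}) (c x : {ffun I -> R})
  (lam : 'I_(size V) -> R) :
  (forall k, x k = \sum_i lam i * (nth [ffun=> 0] V i) k) ->
  dotp c x = \sum_i lam i * dotp c (nth [ffun=> 0] V i).
Proof.
move=> hx; rewrite /dotp.
under eq_bigr do rewrite hx mulr_sumr.
rewrite exchange_big /=; apply: eq_bigr => i _; rewrite mulr_sumr.
by apply: eq_bigr => k _; rewrite mulrCA.
Qed.

Lemma mem_conv (R : realType) (I : finType) (V : seq {ffun I -> R}) v : v \in V -> conv V v.
Proof.
move=> vV; have iv : (index v V < size V)%N by rewrite index_mem.
set i0 := Ordinal iv.
exists (fun i => if i == i0 then 1 else 0); split.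
- by move=> i; case: ifP.
- by rewrite (bigD1 i0) //= eqxx big1 ?addr0 // => i /negbTE ->.
- move=> k; rewrite (bigD1 i0) //= eqxx mul1r big1 ?addr0 ?nth_index //.
  by move=> i /negbTE ->; rewrite mul0r.
Qed.

Lemma conv_support (R : realType) (I : finType) (V : seq {ffun I -> R}) (c x : {ffun I -> R})
  (lam : 'I_(size V) -> R) b :
  (forall i, 0 <= lam i) -> \sum_i lam i = 1 ->
  (forall k, x k = \sum_i lam i * (nth [ffun=> 0] V i) k) ->
  (forall i : 'I_(size V), dotp c (nth [ffun=> 0] V i) <= b) -> dotp c x = b ->
  forall i : 'I_(size V), lam i != 0 -> dotp c (nth [ffun=> 0] V i) = b.
Proof.
move=> l0 l1 lx hle hx.
have s0 : \sum_i lam i * (b - dotp c (nth [ffun=> 0] V i)) = 0.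
  under eq_bigr do rewrite mulrBr.
  by rewrite sumrB -mulr_suml l1 mul1r -(dotp_conv c lx) hx subrr.
have pos : forall i, true -> 0 <= lam i * (b - dotp c (nth [ffun=> 0] V i)).
  by move=> i _; apply: mulr_ge0 => //; rewrite subr_ge0.
have h := psumr_eq0P pos s0.
move=> i li; have := h i isT.
by move/eqP; rewrite mulf_eq0 (negbTE li) /= subr_eq0 => /eqP <-.
Qed.

Lemma vertex_in (R : realType) (I : finType) (V : seq {ffun I -> R}) u :
  is_vertex V u -> u \in V.
Proof.
case=> c [b [hle hF]].
have [[lam [l0 l1 lx]] du] := (hF u).1 erefl.
case: (pickP (fun i => lam i != 0)) => [i li|none]; last first.
  have : \sum_i lam i = 0 by apply: big1 => i _; move: (none i) => /= /negbFE /eqP.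
  by rewrite l1 => /eqP; rewrite oner_eq0.
have vin : nth [ffun=> 0] V i \in V by exact: (mem_nth _ (ltn_ord i)).
have hle' : forall j : 'I_(size V), dotp c (nth [ffun=> 0] V j) <= b.
  by move=> j; exact: (hle _ (mem_conv (mem_nth _ (ltn_ord j)))).
have di := conv_support l0 l1 lx hle' du li.
have <- : nth [ffun=> 0] V i = u by apply/(hF _).2; split => //; exact: mem_conv.
exact: vin.
Qed.

Definition zo (R : realType) (I : finType) (w : {ffun I -> R}) := forall k, w k = 0 \/ w k = 1.

Lemma zo_key (R : realType) (I : finType) (u w : {ffun I -> R}) : zo u -> zo w ->
  dotp [ffun k => 2 * u k - 1] w <= \sum_k u k /\
  (dotp [ffun k => 2 * u k - 1] w = \sum_k u k -> w = u).
Proof.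
move=> zu zw.
have e : \sum_k u k - dotp [ffun k => 2 * u k - 1] w =
         \sum_k (u k - (2 * u k - 1) * w k).
  by rewrite /dotp sumrB; congr (_ - _); apply: eq_bigr => k _; rewrite ffunE.
have pos : forall k, true -> 0 <= u k - (2 * u k - 1) * w k.
  by move=> k _; case: (zu k) => ->; case: (zw k) => ->; lra.
split.
  by rewrite -subr_ge0 e; apply: sumr_ge0.
move=> h; move: e; rewrite h subrr => /esym e.
have h0 := psumr_eq0P pos e.
apply/ffunP => k; have := h0 k isT.
by case: (zu k) => ->; case: (zw k) => ->; lra.
Qed.

Lemma zo_vertex (R : realType) (I : finType) (V : seq {ffun I -> R}) u :
  (forall v, v \in V -> zo v) -> u \in V -> is_vertex V u.
Proof.
move=> hz uV; have zu := hz u uV.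
exists [ffun k => 2 * u k - 1], (\sum_k u k).
have hle' : forall j : 'I_(size V), dotp [ffun k => 2 * u k - 1] (nth [ffun=> 0] V j) <= \sum_k u k.
  by move=> j; exact: (zo_key zu (hz _ (mem_nth _ (ltn_ord j)))).1.
have hle : forall x, conv V x -> dotp [ffun k => 2 * u k - 1] x <= \sum_k u k.
  move=> x [lam [l0 l1 lx]]; rewrite (dotp_conv _ lx).
  apply: le_trans (_ : \sum_i lam i * \sum_k u k <= _).
    by apply: ler_sum => i _; apply: ler_wpM2l.
  by rewrite -mulr_suml l1 mul1r.
split => // x; split.
  move=> ->; split; first exact: mem_conv.
  rewrite /dotp; apply: eq_bigr => k _; rewrite ffunE.
  by case: (zu k) => ->; lra.
case=> [[lam [l0 l1 lx]] dx].
have sup := conv_support l0 l1 lx hle' dx.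
apply/ffunP => k; rewrite lx.
have -> : \sum_i lam i * (nth [ffun=> 0] V i) k = \sum_i lam i * u k.
  apply: eq_bigr => i _; case: (eqVneq (lam i) 0) => [->|li]; first by rewrite !mul0r.
  have zv : zo (nth [ffun=> 0] V i) by apply: hz; apply: mem_nth.
  by rewrite ((zo_key zu zv).2 (sup i li)).
by rewrite -mulr_suml l1 mul1r.
Qed.

Lemma conv2E (R : realType) (I : finType) (x y z : {ffun I -> R}) :
  conv [:: x; y] z <-> exists l, [/\ 0 <= l, l <= 1 & forall k, z k = l * x k + (1 - l) * y k].
Proof.
split.
  case=> lam [l0 l1 lz]; exists (lam ord0).
  move: l1; rewrite !big_ord_recl big_ord0 addr0 => l1.
  split => //.
    by have := l0 (lift ord0 ord0); lra.
  move=> k; rewrite lz !big_ord_recl big_ord0 addr0 /=.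
  by congr (_ + _); congr (_ * _); lra.
case=> l [l0 l1 lz].
exists (fun i : 'I_2 => if val i == 0%N then l else 1 - l); split.
- by move=> i; case: ifP => _; lra.
- by rewrite !big_ord_recl big_ord0 /=; lra.
- by move=> k; rewrite lz !big_ord_recl big_ord0 /= addr0.
Qed.

Lemma pair_face (R : realType) (I : finType) (V : seq {ffun I -> R}) x y w1 w2 :
  (forall v, v \in V -> zo v) -> x \in V -> y \in V -> w1 \in V -> w2 \in V ->
  face_of V (conv [:: x; y]) -> (forall k, w1 k + w2 k = x k + y k) -> w1 = x \/ w1 = y.
Proof.
move=> hz xV yV w1V w2V [c [b [hle hF]]] hs.
have cx : conv [:: x; y] x.
  by apply/conv2E; exists 1; split => [||k]; [exact: ler01 | exact: lexx | lra].
have cy : conv [:: x; y] y.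
  by apply/conv2E; exists 0; split => [||k]; [exact: lexx | exact: ler01 | lra].
have [_ dx] := (hF x).1 cx.
have [_ dy] := (hF y).1 cy.
have d1 := hle _ (mem_conv w1V); have d2 := hle _ (mem_conv w2V).
have dsum : dotp c w1 + dotp c w2 = dotp c x + dotp c y.
  rewrite /dotp -!big_split; apply: eq_bigr => k _ /=.
  by rewrite -!mulrDr hs.
have dw : dotp c w1 = b by lra.
have [l [l0 l1 hl]] := (conv2E x y w1).1 ((hF w1).2 (conj (mem_conv w1V) dw)).
case: (eqVneq l 1) => [e1|n1].
  by left; apply/ffunP => k; rewrite hl e1; lra.
case: (eqVneq l 0) => [e0|n0].
  by right; apply/ffunP => k; rewrite hl e0; lra.
left; apply/ffunP => k; have := hl k.
have zx := hz x xV k; have zy := hz y yV k; have zw := hz w1 w1V k.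
case: zx => ->; case: zy => ->; case: zw => -> h;
  first [ reflexivity | lra | (exfalso; move/eqP: n0; apply; lra) | (exfalso; move/eqP: n1; apply; lra) ].
Qed.

Local Close Scope ring_scope.

Definition snk (A : nat -> bool) j := A j && ~~ A j.+1.
Definition SS (A : nat -> bool) lo hi := \sum_(lo <= j < hi) snk A j.
Definition CH (A : nat -> bool) lo hi := \sum_(lo <= j < hi) (A j != A j.+1).

Lemma parity A k m : 2 * SS A k (k + m) + A (k + m) = A k + CH A k (k + m).
Proof.
elim: m => [|m IH]; first by rewrite addn0 /SS /CH !big_geq //; lia.
rewrite addnS /SS /CH !big_nat_recr ?leq_addr //=.
move: IH; rewrite /SS /CH /snk.

by case: (A (k+m)); case: (A (k+m).+1) => /=; lia.
Qed.

Lemma sum_eq1 k k' c : \sum_(k <= j < k') (j == c) <= 1.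
Proof.
rewrite (eq_bigr (fun j => if j == c then 1 else 0)); last by move=> j _; case: (j == c).
rewrite -big_mkcond big_nat1_eq; by case: ifP.
Qed.

Lemma block A B k k' : k < k' -> A k = B k -> A k' = B k' ->
  (forall j, k < j < k' -> B j = ~~ A j) -> SS A k k' <= SS B k k' + 1.
Proof.
move=> lt ek ek' hj.
have chle : CH A k k' <= CH B k k' + 2.
  apply: (@leq_trans (\sum_(k <= j < k') ((B j != B j.+1) + ((j == k) + (j == k'.-1))))).
    rewrite /CH big_nat [X in _ <= X]big_nat; apply: leq_sum => j /andP[kj jk'].
    case: (eqVneq j k) => [_|nk]; first by case: (A j != A j.+1) => /=; clear; lia.
    case: (eqVneq j k'.-1) => [_|nk']; first by case: (A j != A j.+1) => /=; clear; lia.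
    rewrite (hj j) ?(hj j.+1); first by case: (A j); case: (A j.+1).
      by apply/andP; split; clear -kj jk' nk nk'; lia.
    by apply/andP; split; clear -kj jk' nk nk'; lia.
  rewrite big_split /= big_split /= -/(CH B k k').
  have := sum_eq1 k k' k; have := sum_eq1 k k' k'.-1; clear; lia.
have pa := parity A k (k' - k); have pb := parity B k (k' - k).
rewrite (subnKC (ltnW lt)) in pa pb.
rewrite -ek -ek' in pb. clear hj.
move: pa pb chle; case: (A k); case: (A k') => /=; lia.
Qed.

Lemma block_sym A B k k' : k < k' -> A k = B k -> A k' = B k' ->
  (forall j, k < j < k' -> B j = ~~ A j) ->
  SS A k k' <= SS B k k' + 1 /\ SS B k k' <= SS A k k' + 1.
Proof.
move=> lt ek ek' hj; split; first exact: block.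
apply: block => // j /hj ->; by rewrite negbK.
Qed.

Definition RR (A B : nat -> bool) N k := SS B 0 k + SS A k N.

Lemma SS_split A a b c : a <= b -> b <= c -> SS A a c = SS A a b + SS A b c.
Proof. by move=> ab bc; rewrite /SS (big_cat_nat ab bc). Qed.

Lemma RR_step A B N k k' : k < k' -> k' <= N -> A k = B k -> A k' = B k' ->
  (forall j, k < j < k' -> B j = ~~ A j) ->
  RR A B N k <= RR A B N k' + 1 /\ RR A B N k' <= RR A B N k + 1.
Proof.
move=> lt le ek ek' hj.
have [h1 h2] := block_sym lt ek ek' hj.
rewrite /RR (SS_split B (leq0n k) (ltnW lt)) (SS_split A (ltnW lt) le).
lia.
Qed.

Lemma comb A B N : A 0 = B 0 -> A N = B N ->
  RR A B N N + 2 <= RR A B N 0 ->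
  exists k, [/\ 0 < k < N, A k = B k & RR A B N k + 1 = RR A B N 0].
Proof.
move=> e0 eN hN.
set r0 := RR A B N 0.
suff: forall m k, N - k = m -> k <= N -> A k = B k -> r0 <= RR A B N k + 1 ->
  exists k, [/\ k <= N, A k = B k & RR A B N k + 1 = r0].
  move=> /(_ (N - 0) 0 erefl (leq0n _) e0 (leq_addr 1 _)) [k [kN ek hk]].
  exists k; split => //.
  apply/andP; split.
    rewrite lt0n; apply/eqP => k0; move: hk; rewrite k0 /r0; lia.
  rewrite ltn_neqAle kN andbT; apply/eqP => kN'; move: hk hN; rewrite kN' /r0; lia.
elim/ltn_ind => m IH k em kN ek hk.
case: (eqVneq k N) => [kN'|kN'].
  by move: hk hN; rewrite kN' /r0; lia.
have exn : exists k', (k < k') && (A k' == B k').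
  by exists N; rewrite ltn_neqAle kN' kN eN eqxx.
set k' := ex_minn exn.
have [k'P k'min] : ((k < k') && (A k' == B k')) /\ forall j, (k < j) && (A j == B j) -> k' <= j.
  by rewrite /k'; case: ex_minnP.
case/andP: k'P => kk' /eqP ek'.
have k'N : k' <= N by apply: k'min; rewrite ltn_neqAle kN' kN eN eqxx.
have hj : forall j, k < j < k' -> B j = ~~ A j.
  move=> j /andP[kj jk']; case: (eqVneq (A j) (B j)) => [e|].
    by have := k'min j; rewrite kj e eqxx /= => /(_ isT); lia.
  by case: (A j); case: (B j).
have [s1 s2] := RR_step kk' k'N ek ek' hj.
case: (leqP r0 (RR A B N k' + 1)) => h.
  apply: (IH (N - k')) => //; lia.
exists k; split => //; lia.
Qed.

Lemma nocyc n (G : rel 'I_n) a q : is_tree G -> path G a q -> uniq (a :: q) ->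
  G (last a q) a -> (size q <= 1)%N.
Proof.
move=> [_ _ _ nc] pq uq ge; rewrite leqNgt; apply/negP => sz.
apply: nc; exists (a :: q); split => //=.
by rewrite rcons_path pq ge.
Qed.

Definition antisym n (D : digraph n) := forall i j, darc D i j -> darc D j i -> False.

Lemma dag_antisym n (D : digraph n) : is_dag D -> antisym D.
Proof.
move=> /forallP dD i j dij dji.
by move: (dD j) => /forallP /(_ i) /implyP /(_ dij); rewrite connect1.
Qed.

Lemma skelE n (D : digraph n) G : has_skeleton D G -> forall i j, G i j = darc D i j || darc D j i.
Proof. by move=> /forallP h i j; apply/eqP; move: (h i) => /forallP /(_ j). Qed.

Lemma darcG n (D : digraph n) G i j : has_skeleton D G -> darc D i j -> G i j.
Proof. by move=> /skelE -> ->. Qed.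

Lemma tree_dag n (G : rel 'I_n) (D : digraph n) :
  is_tree G -> has_skeleton D G -> antisym D -> is_dag D.
Proof.
move=> tG sk an; have [_ irr _ _] := tG.
apply/forallP => i; apply/forallP => j; apply/implyP => dji; apply/negP.
case/connectP => q pq ej; subst j.
case/shortenP: pq dji => q' pq' uq' _ dji.
have pG : path G i q' by apply: sub_path pq' => a b; apply: darcG sk.
have := nocyc tG pG uq' (darcG sk dji).
case: q' pq' uq' pG dji => [|c [|d q'']] //= pq' _ _ dji _.
  by move: (darcG sk dji); rewrite irr.
by case/andP: pq' => dic _; apply: (an i c).
Qed.

Definition mix n (L : {set 'I_n}) (D1 D2 : digraph n) : digraph n :=
  [ffun i => if i \in L then D1 i else D2 i].

Lemma mix_local n (L : {set 'I_n}) (Dx Dy : digraph n) :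
  (forall a b, a \in L -> b \notin L -> darc Dx a b = darc Dy a b /\ darc Dx b a = darc Dy b a) ->
  forall a b, (darc (mix L Dy Dx) a b = darc Dx a b /\ darc (mix L Dy Dx) b a = darc Dx b a) \/
              (darc (mix L Dy Dx) a b = darc Dy a b /\ darc (mix L Dy Dx) b a = darc Dy b a).
Proof.
move=> cr a b; rewrite /darc !ffunE.
case: (boolP (a \in L)) => aL; case: (boolP (b \in L)) => bL.
- by right.
- have [e1 e2] := cr a b aL bL; rewrite /darc in e1 e2.
  by left; rewrite e1.
- have [e1 e2] := cr b a bL aL; rewrite /darc in e1 e2.
  by right; rewrite e1.
- by left.
Qed.

Lemma mix_ok n (G : rel 'I_n) (L : {set 'I_n}) (Dx Dy : digraph n) :
  is_tree G -> is_dag Dx -> has_skeleton Dx G -> is_dag Dy -> has_skeleton Dy G ->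
  (forall a b, a \in L -> b \notin L -> darc Dx a b = darc Dy a b /\ darc Dx b a = darc Dy b a) ->
  is_dag (mix L Dy Dx) && has_skeleton (mix L Dy Dx) G.
Proof.
move=> tG dx sx dy sy cr.
have loc := mix_local cr.
have sk : has_skeleton (mix L Dy Dx) G.
  apply/forallP => a; apply/forallP => b.
  by case: (loc a b) => [[-> ->]|[-> ->]]; rewrite -?(skelE sx) -?(skelE sy).
rewrite sk andbT; apply: tree_dag tG sk _ => a b.
case: (loc a b) => [[-> ->]|[-> ->]]; [exact: dag_antisym | exact: dag_antisym].
Qed.

Definition cen n (D : digraph n) (S : {set 'I_n}) i : bool := S \subset i |: D i.

Lemma center_count n (D : digraph n) (S : {set 'I_n}) : antisym D ->
  ([exists i in S, S \subset i |: D i] : nat) = \sum_(i in S) (cen D S i : nat).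
Proof.
move=> an; case: existsP => [[i /andP[iS sub]] | none].
  rewrite (bigD1 i) //= /cen sub big1 // => j /andP[jS ji].
  suff -> : (S \subset j |: D j) = false by [].
  apply/negP => subj.
  have : j \in i |: D i by apply: (subsetP sub).
  have : i \in j |: D j by apply: (subsetP subj).
  rewrite !in_setU1 eq_sym (negbTE ji) /= => h1 h2.
  exact: (an i j h1 h2).
rewrite big1 // => i iS.
suff -> : cen D S i = false by [].
apply/negP => ci; apply: none; exists i.
by rewrite iS.
Qed.

Lemma cimE (R : realType) n (D : digraph n) (S : cidx n) : antisym D ->
  cim R D S = (((\sum_(i in val S) (cen D (val S) i : nat))%N)%:R)%R.
Proof.
move=> an; rewrite ffunE -center_count //.
by case: existsP.
Qed.

Lemma cim_mix_sum (R : realType) n (L : {set 'I_n}) (Dx Dy : digraph n) (S : cidx n) :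
  antisym Dx -> antisym Dy -> antisym (mix L Dy Dx) -> antisym (mix L Dx Dy) ->
  (cim R (mix L Dy Dx) S + cim R (mix L Dx Dy) S = cim R Dx S + cim R Dy S)%R.
Proof.
move=> ax ay a1 a2; rewrite !cimE // -!natrD -!big_split /=.
congr (GRing.natmul 1); apply: eq_bigr => i _; rewrite /cen !ffunE.
by case: (i \in L) => //; rewrite addnC.
Qed.

Definition vt n (x0 : 'I_n) (s : seq 'I_n) j := nth x0 (x0 :: s) j.

Lemma vt_edge n (G : rel 'I_n) x0 s j : path G x0 s -> j < size s -> G (vt x0 s j) (vt x0 s j.+1).
Proof. by move=> /(pathP x0) h js; apply: h. Qed.

Lemma vt_inj n (x0 : 'I_n) s i j : uniq (x0 :: s) -> i <= size s -> j <= size s ->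
  (vt x0 s i == vt x0 s j) = (i == j).
Proof. by move=> u hi hj; rewrite /vt nth_uniq. Qed.

Lemma tri n (G : rel 'I_n) a b c : is_tree G -> G a b -> G b c -> G c a -> uniq [:: a; b; c] -> False.
Proof.
move=> tG ab bc ca u.
have : path G a [:: b; c] by rewrite /= ab bc.
by move=> /(nocyc tG) /(_ u) /(_ ca).
Qed.

Definition sinkD n (x0 : 'I_n) s (D : digraph n) j :=
  (vt x0 s j.-1 \in D (vt x0 s j)) && (vt x0 s j.+1 \in D (vt x0 s j)).

Definition AD n (x0 : 'I_n) s (D : digraph n) j :=
  if j == 0 then false else if j <= size s then vt x0 s j.-1 \in D (vt x0 s j) else true.

Lemma back_arc n (G : rel 'I_n) x0 s (D : digraph n) j : path G x0 s ->
  is_dag D -> has_skeleton D G -> j < size s ->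
  (vt x0 s j.+1 \in D (vt x0 s j)) = ~~ (vt x0 s j \in D (vt x0 s j.+1)).
Proof.
move=> ps dD sD js.
have := vt_edge ps js; rewrite (skelE sD) /darc.
case: (boolP (vt x0 s j \in D (vt x0 s j.+1))) => h1 /= => [_|->//].
apply/negP => h2; exact: (dag_antisym dD h1 h2).
Qed.

Lemma sinkA n (G : rel 'I_n) x0 s (D : digraph n) j : path G x0 s ->
  is_dag D -> has_skeleton D G -> 0 < j < size s ->
  sinkD x0 s D j = snk (AD x0 s D) j.
Proof.
move=> ps dD sD /andP[j0 js].
rewrite /sinkD /snk /AD (back_arc ps dD sD js) /=.
have -> : (j == 0) = false by lia.
have -> : (j <= size s) = true by lia.
by rewrite js.
Qed.

Lemma SS_AD n (G : rel 'I_n) x0 s (D : digraph n) : path G x0 s ->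
  is_dag D -> has_skeleton D G ->
  SS (AD x0 s D) 0 (size s).+1 = \sum_(1 <= j < size s) sinkD x0 s D j.
Proof.
move=> ps dD sD.
rewrite /SS big_ltn // {1}/snk {1}/AD /= add0n.
case: (posnP (size s)) => [->|sp]; first by rewrite !big_geq.
rewrite big_nat_recr //= {2}/snk /AD ltnn /=.
have -> : (size s == 0) = false by lia.
rewrite leqnn andbF addn0.
by apply: eq_big_nat => j hj; rewrite (sinkA ps dD sD hj).
Qed.

Lemma SS_ext A A' a b : (forall j, A j = A' j) -> SS A a b = SS A' a b.
Proof. by move=> h; apply: eq_bigr => j _; rewrite /snk !h. Qed.

Lemma mix_SS A B N k : A k = B k -> k <= N ->
  SS (fun j => if j < k then B j else A j) 0 N = RR A B N k.
Proof.
move=> ek kN; rewrite (SS_split _ (leq0n k) kN) /RR; congr (_ + _).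
  apply: eq_big_nat => j /andP[_ jk]; rewrite /snk jk.
  case: (ltnP j.+1 k) => // h; have -> : j.+1 = k by lia.
  by rewrite ek.
apply: eq_big_nat => j /andP[kj _]; rewrite /snk.
have -> : (j < k) = false by lia.
by have -> : (j.+1 < k) = false by lia.
Qed.

Definition Tset n (x0 : 'I_n) s j : {set 'I_n} := [set vt x0 s j.-1; vt x0 s j; vt x0 s j.+1].

Lemma T_card n (x0 : 'I_n) s j : uniq (x0 :: s) -> 0 < j < size s -> 1 < #|Tset x0 s j|.
Proof.
move=> u hj.
have sub : [set vt x0 s j; vt x0 s j.+1] \subset Tset x0 s j.
  by apply/subsetP => z; rewrite !inE => /orP[]/eqP->; rewrite eqxx !orbT.
apply: leq_trans (subset_leq_card sub); rewrite cards2 (vt_inj u); lia.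
Qed.

Definition Fp (R : realType) n (x0 : 'I_n) s (pt : point R n) : nat :=
  \sum_(1 <= j < size s) (if insub (Tset x0 s j) is Some Sx then pt Sx == 1%R else false).

Lemma Ex_sink n (G : rel 'I_n) x0 s (D : digraph n) j : is_tree G -> path G x0 s ->
  uniq (x0 :: s) -> is_dag D -> has_skeleton D G -> 0 < j < size s ->
  [exists i in Tset x0 s j, Tset x0 s j \subset i |: D i] = sinkD x0 s D j.
Proof.
move=> tG ps u dD sD hj.
have [sG _ _ _] := tG.
set a := vt x0 s j.-1; set b := vt x0 s j; set c := vt x0 s j.+1.
have ab : a != b by rewrite (vt_inj u); lia.
have bc : b != c by rewrite (vt_inj u); lia.
have ac : a != c by rewrite (vt_inj u); lia.
have Gab : G a b.
  have := @vt_edge _ _ x0 s j.-1 ps; rewrite (prednK (n:=j)); last lia.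
  by apply; lia.
have Gbc : G b c by apply: vt_edge; lia.
have noca : ~~ G c a.
  apply/negP => Gca; apply: (tri tG Gab Gbc Gca).
  by rewrite /= !inE negb_or ab ac bc.
apply/idP/idP.
  case/existsP => i /andP[iT sub].
  move: iT; rewrite /Tset !inE => /orP[/orP[]|] /eqP ei; subst i.
  - have : c \in a |: D a by apply: (subsetP sub); rewrite /Tset !inE eqxx !orbT.
    rewrite !inE eq_sym (negbTE ac) /= => h.
    by move: noca; rewrite (darcG sD (i:=c) (j:=a) h).
  - have h1 : a \in b |: D b by apply: (subsetP sub); rewrite /Tset !inE eqxx.
    have h2 : c \in b |: D b by apply: (subsetP sub); rewrite /Tset !inE eqxx !orbT.
    move: h1 h2; rewrite !inE (negbTE ab) eq_sym (negbTE bc) /= => h1 h2.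
    by rewrite /sinkD -/a -/b -/c h1 h2.
  - have : a \in c |: D c by apply: (subsetP sub); rewrite /Tset !inE eqxx.
    rewrite !inE (negbTE ac) /= => h.
    by move: noca; rewrite (sG c a) (darcG sD (i:=a) (j:=c) h).
rewrite /sinkD -/a -/b -/c => /andP[h1 h2].
apply/existsP; exists b; rewrite /Tset !inE eqxx orbT /=.
by apply/subsetP => z; rewrite !inE => /orP[/orP[]|] /eqP ->; rewrite ?h1 ?h2 ?eqxx ?orbT.
Qed.

Lemma Fp_cim (R : realType) n (G : rel 'I_n) x0 s (D : digraph n) : is_tree G -> path G x0 s ->
  uniq (x0 :: s) -> is_dag D -> has_skeleton D G ->
  Fp x0 s (cim R D) = \sum_(1 <= j < size s) sinkD x0 s D j.
Proof.
move=> tG ps u dD sD; apply: eq_big_nat => j hj.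
rewrite (insubT (fun S : {set 'I_n} => 1 < #|S|) (T_card u hj)) ffunE /= (Ex_sink tG ps u dD sD hj).
by case: (sinkD x0 s D j); rewrite ?eqxx // eq_sym oner_eq0.
Qed.

Definition Gc n (G : rel 'I_n) x0 s k : rel 'I_n := fun a b =>
  G a b && ~~ (((a == vt x0 s k.-1) && (b == vt x0 s k)) || ((a == vt x0 s k) && (b == vt x0 s k.-1))).
Definition Lk n (G : rel 'I_n) x0 s k : {set 'I_n} := [set i | connect (Gc G x0 s k) (vt x0 s k.-1) i].

Lemma walk_down n (e : rel 'I_n) x0 s a b : a <= b ->
  (forall i, a <= i < b -> e (vt x0 s i.+1) (vt x0 s i)) -> connect e (vt x0 s b) (vt x0 s a).
Proof.
elim: b => [|b IH] ab h.
  by have -> : a = 0 by lia.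
case: (eqVneq a b.+1) => [->|ne]; first exact: connect0.
have e1 : e (vt x0 s b.+1) (vt x0 s b) by apply: h; lia.
apply: connect_trans (connect1 e1) _; apply: IH; first lia.
by move=> i hi; apply: h; lia.
Qed.

Lemma L_lt n (G : rel 'I_n) x0 s k j : is_tree G -> path G x0 s -> uniq (x0 :: s) ->
  0 < k <= size s -> j < k -> vt x0 s j \in Lk G x0 s k.
Proof.
move=> [sG _ _ _] ps u hk jk; rewrite inE; apply: walk_down; first lia.
move=> i hi; rewrite /Gc sG vt_edge //; last lia.
rewrite !(vt_inj u); lia.
Qed.

Lemma L_k n (G : rel 'I_n) x0 s k : is_tree G -> path G x0 s -> uniq (x0 :: s) ->
  0 < k <= size s -> vt x0 s k \notin Lk G x0 s k.
Proof.
move=> tG ps u hk; have [sG _ _ _] := tG.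
rewrite inE; apply/negP; case/connectP => q pq ek.
case/shortenP: pq ek => q' pq' uq' _ ek.
have pG : path G (vt x0 s k.-1) q' by apply: sub_path pq' => a b /andP[].
have Gl : G (last (vt x0 s k.-1) q') (vt x0 s k.-1).
  rewrite -ek sG; have := @vt_edge _ _ x0 s k.-1 ps; rewrite (prednK (n:=k)); last lia.
  by apply; lia.
have := nocyc tG pG uq' Gl.
case: q' pq' uq' pG Gl ek => [|c [|d q'']] //= pq' _ _ _ ek.
  by move/eqP: ek; rewrite (vt_inj u); lia.
by move: pq'; rewrite -ek /Gc !eqxx /= andbF.
Qed.

Lemma L_ge n (G : rel 'I_n) x0 s k j : is_tree G -> path G x0 s -> uniq (x0 :: s) ->
  0 < k <= size s -> k <= j <= size s -> vt x0 s j \notin Lk G x0 s k.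
Proof.
move=> tG ps u hk hj; have [sG _ _ _] := tG.
apply/negP => jL; move: (L_k tG ps u hk); rewrite !inE in jL *; apply/negP/negPn.
apply: connect_trans jL _; apply: walk_down; first lia.
move=> i hi; rewrite /Gc sG vt_edge //; last lia.
rewrite !(vt_inj u); lia.
Qed.

Lemma L_cross n (G : rel 'I_n) x0 s k a b : is_tree G -> path G x0 s -> uniq (x0 :: s) ->
  0 < k <= size s -> a \in Lk G x0 s k -> b \notin Lk G x0 s k -> G a b ->
  a = vt x0 s k.-1 /\ b = vt x0 s k.
Proof.
move=> tG ps u hk aL bL Gab.
case: (boolP (Gc G x0 s k a b)) => g.
  move: bL; rewrite !inE in aL *; move/negP => []; exact: connect_trans aL (connect1 g).
move: g; rewrite /Gc Gab /= negbK => /orP[] /andP[/eqP ea /eqP eb] //.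
by move: (L_k tG ps u hk); rewrite -ea aL.
Qed.

Lemma back_k n (G : rel 'I_n) x0 s (D : digraph n) k : path G x0 s ->
  is_dag D -> has_skeleton D G -> 0 < k <= size s ->
  darc D (vt x0 s k) (vt x0 s k.-1) = ~~ darc D (vt x0 s k.-1) (vt x0 s k).
Proof.
move=> ps dD sD hk; rewrite /darc.
have := @back_arc _ _ x0 s D k.-1 ps dD sD; rewrite (prednK (n:=k)); last lia.
by apply; lia.
Qed.

Lemma cross_agree n (G : rel 'I_n) x0 s k (Dx Dy : digraph n) : is_tree G -> path G x0 s ->
  uniq (x0 :: s) -> is_dag Dx -> has_skeleton Dx G -> is_dag Dy -> has_skeleton Dy G ->
  0 < k <= size s -> AD x0 s Dx k = AD x0 s Dy k ->
  forall a b, a \in Lk G x0 s k -> b \notin Lk G x0 s k ->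
    darc Dx a b = darc Dy a b /\ darc Dx b a = darc Dy b a.
Proof.
move=> tG ps u dx sx dy sy hk eA a b aL bL.
have [sG _ _ _] := tG.
case: (boolP (G a b)) => Gab.
  have [-> ->] := L_cross tG ps u hk aL bL Gab.
  have e1 : darc Dx (vt x0 s k.-1) (vt x0 s k) = darc Dy (vt x0 s k.-1) (vt x0 s k).
    move: eA; rewrite /AD /darc.
    have -> : (k == 0) = false by lia.
    by have -> : (k <= size s) = true by lia.
  by rewrite !(back_k ps _ _ hk) // e1.
have f : forall D : digraph n, has_skeleton D G -> darc D a b = false /\ darc D b a = false.
  move=> D sD; split; apply/negP => h.
    by move: Gab; rewrite (darcG sD h).
  by move: Gab; rewrite sG (darcG sD h).
by have [-> ->] := f _ sx; have [-> ->] := f _ sy.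
Qed.

Lemma AD_mix n (G : rel 'I_n) x0 s k (Dx Dy : digraph n) : is_tree G -> path G x0 s ->
  uniq (x0 :: s) -> 0 < k <= size s ->
  forall j, AD x0 s (mix (Lk G x0 s k) Dy Dx) j = if j < k then AD x0 s Dy j else AD x0 s Dx j.
Proof.
move=> tG ps u hk j; rewrite /AD.
case: eqP => [_|j0]; first by case: ifP.
case: (leqP j (size s)) => js; last by case: ifP.
rewrite /mix ffunE.
case: (ltnP j k) => jk.
  by rewrite (L_lt tG ps u hk jk).
by rewrite (negbTE (L_ge tG ps u hk _)) //; lia.
Qed.

Definition Drk n (G : rel 'I_n) (h : 'I_n -> nat) : digraph n :=
  [ffun j => [set i | G i j && (h i * n + i < h j * n + j)]].

Lemma rk_inj n (h : 'I_n -> nat) (a b : 'I_n) : h a * n + a = h b * n + b -> a = b.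
Proof.
move=> e; apply: val_inj; have := congr1 (fun x => x %% n) e.
by rewrite /= !modnMDl !modn_small.
Qed.

Lemma rk_ok n (G : rel 'I_n) (h : 'I_n -> nat) : is_tree G ->
  is_dag (Drk G h) && has_skeleton (Drk G h) G.
Proof.
move=> tG; have [sG irr _ _] := tG.
have sk : has_skeleton (Drk G h) G.
  apply/forallP => a; apply/forallP => b; rewrite /darc !ffunE !inE (sG b a).
  case: (boolP (G a b)) => //= Gab.
  have ab : a != b by apply/negP => /eqP e; move: Gab; rewrite e irr.
  have : h a * n + a != h b * n + b by apply/negP => /eqP /rk_inj /eqP; apply/negP.
  by rewrite neq_ltn.
rewrite sk andbT.
have cn : forall q i, path (darc (Drk G h)) i q -> h i * n + i <= h (last i q) * n + last i q.
  elim => [|c q IH] i //= /andP[dic pq]; apply: leq_trans (IH _ pq).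
  by move: dic; rewrite /darc ffunE inE => /andP[_ /ltnW].
apply/forallP => i; apply/forallP => j; apply/implyP => dji; apply/negP.
case/connectP => q pq ej; have := cn _ _ pq; rewrite -ej.
by move: dji; rewrite /darc ffunE inE => /andP[_ ]; lia.
Qed.

Lemma CIM_mem (R : realType) n (G : rel 'I_n) x :
  x \in CIM_points R G -> exists D, [/\ is_dag D, has_skeleton D G & x = cim R D].
Proof. by case/mapP => D; rewrite mem_enum => /andP[d s] ->; exists D. Qed.

Lemma CIM_in (R : realType) n (G : rel 'I_n) D :
  is_dag D -> has_skeleton D G -> cim R D \in CIM_points R G.
Proof. by move=> d s; apply: map_f; rewrite mem_enum unfold_in /= d s. Qed.

Lemma cim_zo (R : realType) n (D : digraph n) : zo (cim R D).
Proof. by move=> S; rewrite ffunE; case: ifP; [right|left]. Qed.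

Lemma CIM_zo (R : realType) n (G : rel 'I_n) : forall v, v \in CIM_points R G -> zo v.
Proof. by move=> v /CIM_mem [D [_ _ ->]]; apply: cim_zo. Qed.

Ltac cl := repeat match goal with H : _ |- _ => clear H end.

Lemma step (R : realType) n (G : rel 'I_n) x0 s x y : is_tree G -> path G x0 s -> uniq (x0 :: s) ->
  x \in CIM_points R G -> y \in CIM_points R G -> face_of (CIM_points R G) (conv [:: x; y]) ->
  (Fp x0 s x <= Fp x0 s y + 1)%N.
Proof.
move=> tG ps u xV yV fc.
have [Dx [dx sx ex]] := CIM_mem xV; have [Dy [dy sy ey]] := CIM_mem yV.
have Fx : Fp x0 s x = SS (AD x0 s Dx) 0 (size s).+1 by rewrite ex (Fp_cim _ tG) // (SS_AD ps).
have Fy : Fp x0 s y = SS (AD x0 s Dy) 0 (size s).+1 by rewrite ey (Fp_cim _ tG) // (SS_AD ps).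
have SS0 : forall C a, SS C a a = 0 by move=> C a; rewrite /SS big_geq.
rewrite leqNgt; apply/negP => hlt.
set A := AD x0 s Dx; set B := AD x0 s Dy; set N := (size s).+1.
have e0 : A 0 = B 0 by rewrite /A /B /AD.
have eN : A N = B N by rewrite /A /B /AD /N /= ltnn.
have hN : (RR A B N N + 2 <= RR A B N 0)%N.
  rewrite /RR !SS0.
  move: hlt; rewrite Fx Fy -/A -/B -/N; cl; lia.
have [k [hk ek hR]] := comb e0 eN hN.
have hk' : (0 < k <= size s)%N by move: hk; rewrite /N; cl; lia.
have cr := cross_agree tG ps u dx sx dy sy hk' ek.
have cr' : forall a b, a \in Lk G x0 s k -> b \notin Lk G x0 s k ->
    darc Dy a b = darc Dx a b /\ darc Dy b a = darc Dx b a.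
  by move=> a b aL bL; have [-> ->] := cr a b aL bL.
have /andP[d1 s1] := mix_ok tG dx sx dy sy cr.
have /andP[d2 s2] := mix_ok tG dy sy dx sx cr'.
have w1V := CIM_in R d1 s1; have w2V := CIM_in R d2 s2.
have hsum : forall S, (cim R (mix (Lk G x0 s k) Dy Dx) S + cim R (mix (Lk G x0 s k) Dx Dy) S
                       = x S + y S)%R.
  move=> S; rewrite ex ey; apply: cim_mix_sum; exact: dag_antisym.
have F1 : Fp x0 s (cim R (mix (Lk G x0 s k) Dy Dx)) = RR A B N k.
  rewrite (Fp_cim _ tG) // -(SS_AD ps) //.
  rewrite (SS_ext 0 (size s).+1 (AD_mix Dx Dy tG ps u hk')).
  by apply: mix_SS => //; move: hk'; rewrite /N; cl; lia.
have := pair_face (@CIM_zo R n G) xV yV w1V w2V fc hsum.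
case=> e; move: F1; rewrite e.
  move: hR; rewrite Fx -/A -/N /RR SS0; cl; lia.
move: hR hlt; rewrite Fx Fy -/A -/B -/N /RR SS0; cl; lia.
Qed.

Lemma walk_F (R : realType) n (G : rel 'I_n) x0 s : is_tree G -> path G x0 s -> uniq (x0 :: s) ->
  forall q a, walk (CIM_points R G) a q -> (Fp x0 s a <= Fp x0 s (last a q) + size q)%N.
Proof.
move=> tG ps u; elim => [|b q IH] a /=; first by rewrite addn0.
case=> [[va vb _ fc] wq].
apply: leq_trans (step tG ps u (vertex_in va) (vertex_in vb) fc) _.
by rewrite addn1 addnS ltnS; apply: IH.
Qed.

Lemma sum_odd m : \sum_(1 <= j < m) (odd j : nat) = m./2.
Proof.
elim: m => [|m IH]; first by rewrite big_geq.
case: m IH => [|m] IH; first by rewrite big_geq.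
rewrite big_nat_recr //= IH /= uphalf_half.
by case: (odd m) => /=; cl; lia.
Qed.

Lemma ix n (x0 : 'I_n) s i : uniq (x0 :: s) -> i <= size s -> index (vt x0 s i) (x0 :: s) = i.
Proof. by move=> u hi; rewrite /vt index_uniq. Qed.

Lemma sink_u n (G : rel 'I_n) x0 s j : is_tree G -> path G x0 s -> uniq (x0 :: s) -> 0 < j < size s ->
  sinkD x0 s (Drk G (fun i => odd (index i (x0 :: s)))) j = odd j.
Proof.
move=> [sG _ _ _] ps u /andP[j0 js].
have e1 : G (vt x0 s j.-1) (vt x0 s j).
  by have := @vt_edge _ _ x0 s j.-1 ps; rewrite (prednK j0); apply; lia.
have e2 : G (vt x0 s j.+1) (vt x0 s j) by rewrite sG; apply: vt_edge.
rewrite /sinkD !ffunE !inE (ix u (i:=j.-1)) ?(ix u (i:=j)) ?(ix u (i:=j.+1)); try lia.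
rewrite e1 e2 /=.
have l1 := ltn_ord (vt x0 s j.-1); have l2 := ltn_ord (vt x0 s j); have l3 := ltn_ord (vt x0 s j.+1).
move: l1 l2 l3; clear e1 e2.
case: j j0 js => [//|j'] _ _ /=.
rewrite negbK; case: (odd j') => /=; lia.
Qed.

Lemma sink_v n (G : rel 'I_n) x0 s j : is_tree G -> path G x0 s -> uniq (x0 :: s) -> 0 < j < size s ->
  sinkD x0 s (Drk G (fun i => index i (x0 :: s))) j = false.
Proof.
move=> [sG _ _ _] ps u /andP[j0 js].
rewrite /sinkD !ffunE !inE (ix u (i:=j)) ?(ix u (i:=j.+1)); try lia.
have l2 := ltn_ord (vt x0 s j); have l3 := ltn_ord (vt x0 s j.+1).
have : ~~ (j.+1 * n + vt x0 s j.+1 < j * n + vt x0 s j).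
  rewrite mulSn -leqNgt; move: l2 l3; cl; lia.
by move/negbTE => ->; rewrite !andbF.
Qed.

Theorem mainTheorem4 (R : realType) (n : nat) (G : rel 'I_n) (p : nat) :
  is_tree G -> max_path_length G p ->
  diam_ge (CIM_points R G) p./2.
Proof.
move=> tG [[x0 [s [/andP[ps u] sz]]] _]; subst p.
have /andP[du su] := rk_ok (fun i => odd (index i (x0 :: s))) tG.
have /andP[dv sv] := rk_ok (fun i => index i (x0 :: s)) tG.
exists (cim R (Drk G (fun i => odd (index i (x0 :: s))))),
       (cim R (Drk G (fun i => index i (x0 :: s)))); split.
- by apply: zo_vertex; [exact: CIM_zo | exact: CIM_in].
- by apply: zo_vertex; [exact: CIM_zo | exact: CIM_in].
move=> q wq lq; have := walk_F tG ps u wq; rewrite lq.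
rewrite !(Fp_cim _ tG) //.
have -> : \sum_(1 <= j < size s) sinkD x0 s (Drk G (fun i => odd (index i (x0 :: s)))) j = (size s)./2.
  by rewrite -sum_odd; apply: eq_big_nat => j hj; rewrite (sink_u tG ps u hj).
have -> : \sum_(1 <= j < size s) sinkD x0 s (Drk G (fun i => index i (x0 :: s))) j = 0.
  by rewrite big_nat big1 // => j hj; rewrite (sink_v tG ps u hj).
by cl; lia.
Qed.
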